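(* Let $M$ be a simple extended matrix with $n\geq 1$ rows, $m\geq 0$ left columns and $k\geq 1$ variables, $$M=\left[ \begin{array}{ccc|c} x_{11} & \cdots & x_{1m} & y_{1}\\ \vdots & & \vdots & \vdots\\ x_{n1} & \cdots & x_{nm} & y_{n}\end{array} \right],$$ and let $n',k'\geq 2$ be integers. Then $M\Rightarrow_{\mathsf{lex}} \mathsf{Cube}_{n',k'}$ holds if and only if there exist indices $i_1,\dots,i_{n'}\in\{1,\dots,n\}$ (not necessarily distinct) such that there is no $j\in\{1,\dots,m\}$ with $x_{i_a j}=y_{i_a}$ for every $a\in\{1,\dots,n'\}$.
   Context: A simple extended matrix $M$ (with parameters $n\geq 1$, $m\geq 0$, $k\geq 1$) is an $n\times(m+1)$ array as displayed, whose entries $x_{ij}$ ($1\le i\le n$, $1\le j\le m$) and $y_i$ are (not necessarily distinct) variables from $\{x_1,\dots,x_k\}$; the first $m$ columns are the left columns and the last column is the right column. Let $\mathbb{C}$ be a finitely complete category. An internal $n$-ary relation is a monomorphism $r\colon R\rightarrowtail A^n$. It is $M$-closed if for every object $B$ and every function $f\colon\{x_1,\dots,x_k\}\to\mathbb{C}(B,A)$ such that, for each $j\in\{1,\dots,m\}$, the induced morphism $(f(x_{1j}),\dots,f(x_{nj}))\colon B\to A^n$ factors through $r$, the morphism $(f(y_1),\dots,f(y_n))\colon B\to A^n$ also factors through $r$. $\mathbb{C}$ has $M$-closed relations if every internal $n$-ary relation in $\mathbb{C}$ is $M$-closed. For simple extended matrices $M_1,M_2$, $M_1\Rightarrow_{\mathsf{lex}}M_2$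 means: every finitely complete category with $M_1$-closed relations has $M_2$-closed relations. For integers $n,k\geq 2$, $\mathsf{Cube}_{n,k}$ is the simple extended matrix with $n$ rows and variables $\{x_1,\dots,x_k\}$ whose $k^n-1$ left columns are all the $n$-tuples of elements of $\{x_1,\dots,x_k\}$ except $(x_1,\dots,x_1)$ (in lexicographic order), and whose right column is $(x_1,\dots,x_1)$. *)

(* Defs.v *)
From mathcomp Require Import all_boot.
Set Implicit Arguments. Unset Strict Implicit. Unset Printing Implicit Defensive.

Record Category := {
  Obj :> Type;
  Hom : Obj -> Obj -> Type;
  idm : forall X, Hom X X;
  comp : forall X Y Z, Hom Y Z -> Hom X Y -> Hom X Z;  (* comp g f = g o f *)
  comp_assoc : forall X Y Z W (f : Hom X Y) (g : Hom Y Z) (h : Hom Z W),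
      comp h (comp g f) = comp (comp h g) f;
  comp_idl : forall X Y (f : Hom X Y), comp (idm Y) f = f;
  comp_idr : forall X Y (f : Hom X Y), comp f (idm X) = f }.

Arguments Hom {C} X Y : rename.
Arguments idm {C} X : rename.
Arguments comp {C X Y Z} g f : rename.

Definition is_mono (C : Category) (X Y : C) (r : Hom X Y) : Prop :=
  forall (Z : C) (g h : Hom Z X), comp r g = comp r h -> g = h.

Definition is_terminal (C : Category) (T : C) : Prop :=
  forall X : C, exists u : Hom X T, forall v : Hom X T, v = u.

Definition is_binary_product (C : Category) (A B P : C)
  (p1 : Hom P A) (p2 : Hom P B) : Prop :=
  forall (X : C) (f : Hom X A) (g : Hom X B),
    exists u : Hom X P, (comp p1 u = f /\ comp p2 u = g) /\
      forall v : Hom X P, comp p1 v = f -> comp p2 v = g -> v = u.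

Definition is_equalizer (C : Category) (A B E : C) (f g : Hom A B)
  (e : Hom E A) : Prop :=
  comp f e = comp g e /\
  forall (X : C) (h : Hom X A), comp f h = comp g h ->
    exists u : Hom X E, comp e u = h /\ forall v : Hom X E, comp e v = h -> v = u.

(* Finitely complete: terminal object, binary products and equalizers
   (the standard equivalent of having all finite limits). *)
Definition finitely_complete (C : Category) : Prop :=
  (exists T : C, is_terminal T) /\
  (forall A B : C, exists (P : C) (p1 : Hom P A) (p2 : Hom P B),
      is_binary_product p1 p2) /\
  (forall (A B : C) (f g : Hom A B), exists (E : C) (e : Hom E A),
      is_equalizer f g e).

Definition is_power (C : Category) (n : nat) (A P : C) (p : 'I_n -> Hom P A) : Prop :=
  forall (X : C) (h : 'I_n -> Hom X A),
    exists u : Hom X P, (forall i, comp (p i) u = h i) /\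
      forall v : Hom X P, (forall i, comp (p i) v = h i) -> v = u.

(* n rows, m left columns, variables x_1..x_k indexed by 'I_k (x_1 = ord 0). *)
Record sem (n m k : nat) := SEM {
  sem_left : 'I_n -> 'I_m -> 'I_k;
  sem_right : 'I_n -> 'I_k }.

(* The morphism B -> A^n with components h i factors through r : R -> A^n
   (written out via the universal property of the power (P, p)). *)
Definition factors_through (C : Category) (n : nat) (A P R B : C)
  (p : 'I_n -> Hom P A) (r : Hom R P) (h : 'I_n -> Hom B A) : Prop :=
  exists g : Hom B R, forall i, comp (p i) (comp r g) = h i.

Definition M_closed (C : Category) (n m k : nat) (M : sem n m k)
  (A P R : C) (p : 'I_n -> Hom P A) (r : Hom R P) : Prop :=
  forall (B : C) (f : 'I_k -> Hom B A),
    (forall j : 'I_m, factors_through p r (fun i => f (sem_left M i j))) ->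
    factors_through p r (fun i => f (sem_right M i)).

Definition has_M_closed_relations (C : Category) (n m k : nat) (M : sem n m k) : Prop :=
  forall (A P : C) (p : 'I_n -> Hom P A), is_power p ->
  forall (R : C) (r : Hom R P), is_mono r -> M_closed M p r.

Definition lex_implies (n1 m1 k1 n2 m2 k2 : nat)
  (M1 : sem n1 m1 k1) (M2 : sem n2 m2 k2) : Prop :=
  forall C : Category, finitely_complete C ->
    has_M_closed_relations C M1 -> has_M_closed_relations C M2.

(* Left column j (0-based) is the (j+1)-th n-tuple in lexicographic order over
   x_1 < ... < x_k, i.e. row i holds the base-k digit of j+1 of weight
   k^(n-1-i); tuple number 0 = (x_1,...,x_1) is omitted and is the right column. *)
Definition cube_entry (n k : nat) (Hk : 0 < k) (i : 'I_n) (j : 'I_(k ^ n - 1)) : 'I_k :=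
  Ordinal (ltn_pmod ((j.+1) %/ k ^ (n - 1 - i)) Hk).

Definition Cube (n k : nat) (Hk : 0 < k) : sem n (k ^ n - 1) k :=
  @SEM n (k ^ n - 1) k (fun i j => @cube_entry n k Hk i j) (fun _ => Ordinal Hk).
Arguments Cube n {k} Hk.

(* Main.v *)
Require Import Defs.
From mathcomp Require Import all_boot zify.
From Stdlib Require Import Classical ProofIrrelevance FunctionalExtensionality IndefiniteDescription.
Set Implicit Arguments. Unset Strict Implicit. Unset Printing Implicit Defensive.
Notation cmp := Defs.comp.

Lemma digit_step (k n N c : nat) (hk : 0 < k) (hc : c < k) (i : 'I_n) :
  (N * k + c) %/ k ^ (n.+1 - 1 - i) = N %/ k ^ (n - 1 - i).
Proof.
have -> : n.+1 - 1 - i = (n - 1 - i).+1.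
  have := ltn_ord i; clear; lia.
by rewrite expnS divnMA divnMDl // (divn_small hc) addn0.
Qed.

Lemma digits_exist (k n : nat) (hk : 0 < k) (c : 'I_n -> nat) (hc : forall i, c i < k) :
  exists N, N < k ^ n /\ forall i : 'I_n, N %/ k ^ (n - 1 - i) %% k = c i.
Proof.
elim: n c hc => [|n IH] c hc.
  by exists 0; split => //; case.
have [N [HN HNi]] := IH (fun i => c (widen_ord (leqnSn n) i)) (fun i => hc _).
exists (N * k + c ord_max); split.
  rewrite expnSr.
  have h := hc ord_max; move: HN h; clear; set K := k ^ n; nia.
move=> i.
have [Hi|Hi] := eqVneq (val i) n.
  have -> : i = ord_max by apply: val_inj.
  by rewrite /= subn1 /= subnn expn0 divn1 modnMDl modn_small.
have Hin : i < n by rewrite ltn_neqAle Hi -ltnS ltn_ord.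
have := digit_step N hk (hc ord_max) (Ordinal Hin); rewrite /= => ->.
rewrite (HNi (Ordinal Hin)); congr c; exact: val_inj.
Qed.

Lemma digits_nonzero (k n N : nat) (hk : 0 < k) : N < k ^ n -> 0 < N ->
  exists i : 'I_n, N %/ k ^ (n - 1 - i) %% k != 0.
Proof.
elim: n N => [|n IH] N.
  by rewrite expn0 ltnS leqn0 => /eqP ->.
move=> HN HN0.
have [Hm|Hm] := eqVneq (N %% k) 0; last first.
  exists ord_max; by rewrite /= subn1 /= subnn expn0 divn1.
have HNe : N = N %/ k * k + N %% k by rewrite -divn_eq.
have HN' : N %/ k < k ^ n.
  by rewrite ltn_divLR // -expnSr.
have HN0' : 0 < N %/ k.
  move: HN0; rewrite {1}HNe Hm addn0 muln_gt0; by case/andP.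
have [i Hi] := IH _ HN' HN0'.
exists (widen_ord (leqnSn n) i).
rewrite {1}HNe Hm.
have := @digit_step k n (N %/ k) 0 hk hk i. rewrite /= => ->. done.
Qed.

Section Gen.
Variable C : Category.

Lemma power_unique (n : nat) (A P : C) (p : 'I_n -> Hom P A) (Hp : is_power p)
  (X : C) (x y : Hom X P) : (forall i, cmp (p i) x = cmp (p i) y) -> x = y.
Proof.
move=> H.
have [u [_ Hu]] := Hp X (fun i => cmp (p i) y).
by rewrite (Hu x H) (Hu y (fun _ => erefl)).
Qed.

Lemma ord0_empty : 'I_0 -> False. Proof. by case. Qed.

Lemma power_exists (hC : finitely_complete C) (n : nat) (A : C) :
  exists (P : C) (p : 'I_n -> Hom P A), is_power p.
Proof.
case: hC => [[T HT] [Hprod _]].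
elim: n => [|n [Q [q Hq]]].
  exists T, (fun i => False_rect _ (ord0_empty i)).
  move=> X h; have [u Hu] := HT X; exists u; split => //; by case.
have [P [p1 [p2 Hpr]]] := Hprod Q A.
exists P, (fun i => match unlift ord_max i with Some i' => cmp (q i') p1 | None => p2 end).
move=> X h.
have [u' [Hu'1 Hu'2]] := Hq X (fun i' => h (lift ord_max i')).
have [u [[Hu1 Hu2] Hu]] := Hpr X u' (h ord_max).
exists u; split.
  move=> i; case: (unliftP ord_max i) => [i'|] ->.
    by rewrite ?liftK -comp_assoc Hu1 Hu'1.
  by rewrite ?unlift_none.
move=> v Hv; apply: Hu.
  apply: Hu'2 => i'; have := Hv (lift ord_max i'); by rewrite ?liftK -comp_assoc.
by have := Hv ord_max; rewrite ?unlift_none.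
Qed.

Lemma pullback_exists (hC : finitely_complete C) (R P Q : C) (r : Hom R P)
  (phi : Hom Q P) : is_mono r ->
  exists (T : C) (t : Hom T Q), is_mono t /\
    forall (Y : C) (w : Hom Y Q),
      (exists g, cmp r g = cmp phi w) <-> (exists v, cmp t v = w).
Proof.
case: hC => [_ [Hprod Heq]] Hr.
have [S [p1 [p2 Hpr]]] := Hprod R Q.
have [T [e [He1 He2]]] := Heq S P (cmp r p1) (cmp phi p2).
exists T, (cmp p2 e); split.
  move=> Z g h Hgh.
  have L : forall x : Hom Z T, cmp r (cmp p1 (cmp e x)) = cmp phi (cmp (cmp p2 e) x).
    by move=> x; rewrite !comp_assoc He1.
  have E1 : cmp p1 (cmp e g) = cmp p1 (cmp e h).
    by apply: Hr; rewrite !L Hgh.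
  have E2 : cmp p2 (cmp e g) = cmp p2 (cmp e h) by rewrite !comp_assoc.
  have [u [_ Hu]] := Hpr Z (cmp p1 (cmp e h)) (cmp p2 (cmp e h)).
  have Eeg : cmp e g = cmp e h by rewrite (Hu _ E1 E2) (Hu _ erefl erefl).
  have Heh : cmp (cmp r p1) (cmp e h) = cmp (cmp phi p2) (cmp e h)
    by rewrite !comp_assoc He1.
  have [u2 [_ Hu2]] := He2 Z (cmp e h) Heh.
  by rewrite (Hu2 g Eeg) (Hu2 h erefl).
move=> Y w; split.
  case=> g Hg.
  have [u [[Hu1 Hu2] _]] := Hpr Y g w.
  have Hequ : cmp (cmp r p1) u = cmp (cmp phi p2) u.
    by rewrite -!comp_assoc Hu1 Hu2.
  have [v [Hv _]] := He2 Y u Hequ.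
  by exists v; rewrite -comp_assoc Hv.
case=> v Hv; exists (cmp p1 (cmp e v)).
by rewrite -Hv !comp_assoc He1.
Qed.

End Gen.

Lemma backward (n m k : nat) (M : sem n m k) (n' k' : nat) (hk' : 1 < k')
  (idx : 'I_n' -> 'I_n)
  (Hidx : ~ exists j : 'I_m, forall a, sem_left M (idx a) j = sem_right M (idx a)) :
  lex_implies M (Cube n' (ltnW hk')).
Proof.
move=> C hC HM A P p Hp R r Hr B f Hcols.
rewrite /factors_through /=.
set o0 : 'I_k' := Ordinal (ltnW hk'); set o1 : 'I_k' := Ordinal hk'.
have [P' [q Hq]] := power_exists hC n P.
have [phi Hphi] : exists phi : Hom P' P, forall a, cmp (p a) phi = cmp (p a) (q (idx a)).
  by have [u [Hu _]] := Hp P' (fun a => cmp (p a) (q (idx a))); exists u.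
have [T [t [Ht Hpb]]] := pullback_exists hC phi Hr.
pose d (v : 'I_k) (a : 'I_n') : 'I_k' := if v == sem_right M (idx a) then o0 else o1.
have [G HG] : exists G : 'I_k -> Hom B P, forall v a, cmp (p a) (G v) = f (d v a).
  have H0 : forall v : 'I_k, exists u : Hom B P, forall a, cmp (p a) u = f (d v a).
    by move=> v; have [u [Hu _]] := Hp B (fun a => f (d v a)); exists u.
  exact: (fin_all_exists H0).
have Hcol : forall j : 'I_m, factors_through q t (fun i => G (sem_left M i j)).
  move=> j.
  have [w [Hw _]] := Hq B (fun i => G (sem_left M i j)).
  have [v Hv] : exists v, cmp t v = w.
    apply/(Hpb B w).
    have [a0 Ha] : exists a, sem_left M (idx a) j != sem_right M (idx a).
      case: (boolP [exists a, sem_left M (idx a) j != sem_right M (idx a)]).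
        by move/existsP.
      rewrite negb_exists => /forallP H; exfalso; apply: Hidx; exists j => a.
      by have := H a; rewrite negbK => /eqP.
    have [N [HN HNd]] := @digits_exist k' n' (ltnW hk')
       (fun a => val (d (sem_left M (idx a) j) a)) (fun a => ltn_ord _).
    have N0 : 0 < N.
      rewrite lt0n; apply/negP => /eqP N0; have := HNd a0.
      by rewrite N0 div0n mod0n /d (negbTE Ha).
    have Hj' : N.-1 < k' ^ n' - 1 by move: HN N0; clear; lia.
    have [g' Hg'] := Hcols (Ordinal Hj').
    exists g'; apply: (power_unique Hp) => a.
    rewrite Hg' /= comp_assoc Hphi -comp_assoc Hw HG.
    congr f; apply: val_inj; by rewrite /= prednK // HNd.
  by exists v => i; rewrite Hv Hw.
have [gT HgT] := HM P P' q Hq T t Ht B G Hcol.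
have [g' Hg'] : exists g', cmp r g' = cmp phi (cmp t gT).
  by apply/(Hpb B (cmp t gT)); exists gT.
exists g' => a.
by rewrite Hg' comp_assoc Hphi -comp_assoc HgT HG /d eqxx.
Qed.

Section NU.
Variable d : nat.

Record nualg := NUAlg {
  ncar :> Type;
  nop : ('I_d.+1 -> ncar) -> ncar;
  nnu : forall (u : 'I_d.+1 -> ncar) (l : 'I_d.+1) (x : ncar),
          (forall i, i != l -> u i = x) -> nop u = x }.

Definition nhom (X Y : nualg) :=
  {h : X -> Y | forall u, h (nop u) = nop (fun l => h (u l))}.

Definition mkhom (X Y : nualg) (h : X -> Y)
  (H : forall u, h (nop u) = nop (fun l => h (u l))) : nhom X Y := exist _ h H.

Lemma nhom_eq (X Y : nualg) (g h : nhom X Y) :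
  (forall x, proj1_sig g x = proj1_sig h x) -> g = h.
Proof.
case: g h => [g Hg] [h Hh] /= E.
have E' : g = h by apply: functional_extensionality.
subst h; f_equal; apply: proof_irrelevance.
Qed.

Lemma sig_eq (T : Type) (P : T -> Prop) (a b : sig P) :
  proj1_sig a = proj1_sig b -> a = b.
Proof.
case: a b => [a Ha] [b Hb] /= E; subst b; f_equal; apply: proof_irrelevance.
Qed.

Definition nid (X : nualg) : nhom X X := @mkhom X X (fun x => x) (fun u => erefl).

Lemma ncomp_proof (X Y Z : nualg) (g : nhom Y Z) (f : nhom X Y) :
  forall u, proj1_sig g (proj1_sig f (nop u)) =
            nop (fun l => proj1_sig g (proj1_sig f (u l))).
Proof. by move=> u; rewrite (proj2_sig f) (proj2_sig g). Qed.

Definition ncomp (X Y Z : nualg) (g : nhom Y Z) (f : nhom X Y) : nhom X Z :=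
  @mkhom X Z (fun x => proj1_sig g (proj1_sig f x)) (ncomp_proof g f).

Definition NUcat : Category.
Proof.
refine (@Build_Category nualg nhom nid ncomp _ _ _).
- by move=> *; apply: nhom_eq.
- by move=> *; apply: nhom_eq.
- by move=> *; apply: nhom_eq.
Defined.

Definition unitalg : nualg := @NUAlg unit (fun _ => tt) (fun _ _ x _ => match x with tt => erefl end).

Lemma prod_nu (X Y : nualg) (u : 'I_d.+1 -> X * Y) (l : 'I_d.+1) (x : X * Y) :
  (forall i, i != l -> u i = x) ->
  (nop (fun l => (u l).1), nop (fun l => (u l).2)) = x.
Proof.
move=> H; case: x H => x1 x2 H.
by rewrite (nnu (l:=l) (x:=x1)) ?(nnu (l:=l) (x:=x2)) // => i /H ->.
Qed.

Definition prodalg (X Y : nualg) : nualg :=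
  @NUAlg (X * Y) (fun u => (nop (fun l => (u l).1), nop (fun l => (u l).2))) (@prod_nu X Y).

Section Eq.
Variables (X Y : nualg) (f g : nhom X Y).
Definition eqcar := {x : X | proj1_sig f x = proj1_sig g x}.
Lemma eqop_proof (u : 'I_d.+1 -> eqcar) :
  proj1_sig f (nop (fun l => proj1_sig (u l))) = proj1_sig g (nop (fun l => proj1_sig (u l))).
Proof.
rewrite (proj2_sig f) (proj2_sig g); congr nop; apply: functional_extensionality => l.
exact: proj2_sig (u l).
Qed.
Definition eqop (u : 'I_d.+1 -> eqcar) : eqcar := exist _ _ (eqop_proof u).
Lemma eq_nu (u : 'I_d.+1 -> eqcar) (l : 'I_d.+1) (x : eqcar) :
  (forall i, i != l -> u i = x) -> eqop u = x.
Proof.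
move=> H; apply: sig_eq => /=; apply: (nnu (l:=l)) => i /H -> //.
Qed.
Definition eqalg : nualg := @NUAlg eqcar eqop eq_nu.
End Eq.

Lemma NUcat_fc : finitely_complete NUcat.
Proof.
split; [|split].
- exists unitalg => X.
  exists (@mkhom X unitalg (fun _ => tt) (fun _ => erefl)).
  by move=> v; apply: nhom_eq => x /=; case: (proj1_sig v x).
- move=> A B.
  exists (prodalg A B).
  exists (@mkhom (prodalg A B) A (fun x => x.1) (fun u => erefl)).
  exists (@mkhom (prodalg A B) B (fun x => x.2) (fun u => erefl)).
  move=> X f g.
  have Hp : forall u, (proj1_sig f (nop u), proj1_sig g (nop u)) =
     (@nop (prodalg A B) (fun l => (proj1_sig f (u l), proj1_sig g (u l)))).
    by move=> u; rewrite (proj2_sig f) (proj2_sig g).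
  exists (@mkhom X (prodalg A B) (fun x => (proj1_sig f x, proj1_sig g x)) Hp).
  split; first by split; apply: nhom_eq.
  move=> v Hv1 Hv2; apply: nhom_eq => x /=.
  rewrite -Hv1 -Hv2 /=; by case: (proj1_sig v x).
- move=> A B f g.
  exists (eqalg f g).
  exists (@mkhom (eqalg f g) A (fun x => proj1_sig x) (fun u => erefl)).
  split; first by apply: nhom_eq => -[x Hx].
  move=> X h Hh.
  have Hx : forall x, proj1_sig f (proj1_sig h x) = proj1_sig g (proj1_sig h x).
    by move=> x; have := congr1 (fun k : nhom X B => proj1_sig k x) Hh.
  have Hp : forall u, (exist _ (proj1_sig h (nop u)) (Hx (nop u)) : eqalg f g) =
     nop (fun l => (exist _ (proj1_sig h (u l)) (Hx (u l)) : eqalg f g)).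
    by move=> u; apply: sig_eq => /=; rewrite (proj2_sig h).
  exists (@mkhom X (eqalg f g) (fun x => (exist _ (proj1_sig h x) (Hx x) : eqalg f g)) Hp).
  split; first by apply: nhom_eq.
  move=> v Hv; apply: nhom_eq => x; apply: sig_eq => /=.
  by rewrite -Hv.
Qed.

End NU.

Lemma BP (d n : nat) (X : Type) (op : ('I_d.+1 -> X) -> X)
  (nu : forall (u : 'I_d.+1 -> X) (l : 'I_d.+1) (x : X),
          (forall i, i != l -> u i = x) -> op u = x)
  (Rt : Type) (opR : ('I_d.+1 -> Rt) -> Rt) (phi : Rt -> 'I_n -> X)
  (hom : forall w i, phi (opR w) i = op (fun l => phi (w l) i))
  (t : 'I_n -> X) (i0 : 'I_n)
  (H : forall idx : 'I_d -> 'I_n, exists rho, forall a, phi rho (idx a) = t (idx a)) :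
  exists rho, forall i, phi rho i = t i.
Proof.
suff S : forall s (K : {set 'I_n}), #|K| <= s ->
    exists rho, forall i, i \in K -> phi rho i = t i.
  have Hn : #|[set: 'I_n]| <= n by rewrite cardsT card_ord.
  have [rho Hr] := S n setT Hn.
  by exists rho => i; apply: Hr; rewrite in_setT.
elim=> [|s IH] K HK.
  have [rho _] := H (fun _ => i0); exists rho => i.
  by move: HK; rewrite leqn0 cards_eq0 => /eqP ->; rewrite in_set0.
case: (leqP s.+1 d) => Hsd.
  have [rho Hr] := H (fun a => nth i0 (enum K) a).
  exists rho => i iK.
  have Ha : index i (enum K) < d.
    apply: leq_trans Hsd; apply: leq_trans HK.
    by rewrite cardE index_mem mem_enum.
  have := Hr (Ordinal Ha); by rewrite /= nth_index // mem_enum.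
case: (leqP #|K| s) => HKs; first exact: IH.
pose kk (l : 'I_d.+1) := nth i0 (enum K) l.
have kkK : forall l : 'I_d.+1, kk l \in K.
  move=> l; rewrite -mem_enum mem_nth // -cardE.
  by apply: leq_trans HKs; apply: leq_trans (ltn_ord l) _.
have Hl : forall l, exists rho, forall i, i \in K :\ kk l -> phi rho i = t i.
  move=> l; apply: IH.
  by move: HK; rewrite (cardsD1 (kk l) K) kkK add1n ltnS.
have [rhos Hrhos] := fin_all_exists Hl.
exists (opR rhos) => i iK.
rewrite hom; apply: (nu _ (inord (index i (enum K)))) => l Hl0.
apply: Hrhos; rewrite in_setD1 iK andbT.
apply/eqP => Ei; move/eqP: Hl0; apply.
apply: val_inj; rewrite /= Ei /kk index_uniq ?enum_uniq ?inord_val //.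
  by rewrite -cardE; apply: leq_trans HKs; apply: leq_trans (ltn_ord l) _.
Qed.

Section NUc.
Variable d : nat.

Definition pt (X : nualg d) (x : X) : nhom (unitalg d) X.
Proof.
exists (fun _ => x) => u; symmetry; exact: (nnu (l:=ord0)).
Defined.

Lemma mono_inj (X Y : nualg d) (r : nhom X Y) : @is_mono (NUcat d) X Y r ->
  forall a b, proj1_sig r a = proj1_sig r b -> a = b.
Proof.
move=> Hr a b E.
have E2 : pt a = pt b.
  by apply: Hr; apply: nhom_eq => -[] /=.
exact: (congr1 (fun h : nhom (unitalg d) X => proj1_sig h tt) E2).
Qed.

Lemma power_det (n : nat) (A P : nualg d) (p : 'I_n -> nhom P A)
  (Hp : @is_power (NUcat d) n A P p) (a b : P) :
  (forall i, proj1_sig (p i) a = proj1_sig (p i) b) -> a = b.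
Proof.
move=> H.
have E : pt a = pt b.
  apply: (power_unique Hp) => i; apply: nhom_eq => -[] /=; exact: H.
exact: (congr1 (fun h : nhom (unitalg d) P => proj1_sig h tt) E).
Qed.

Lemma NU_closed (n m k : nat) (M : sem n m k) (hn : 0 < n)
  (Hcov : forall idx : 'I_d -> 'I_n, exists j : 'I_m,
     forall a, sem_left M (idx a) j = sem_right M (idx a)) :
  has_M_closed_relations (NUcat d) M.
Proof.
move=> A P p Hp R r Hr B f Hcols.
have Hb : forall b : B, exists rho : R, forall i,
    proj1_sig (p i) (proj1_sig r rho) = proj1_sig (f (sem_right M i)) b.
  move=> b.
  apply: (@BP d n A (@nop d A) (@nnu d A) R (@nop d R)
            (fun rho i => proj1_sig (p i) (proj1_sig r rho)) _
            (fun i => proj1_sig (f (sem_right M i)) b) (Ordinal hn)).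
    by move=> w i /=; rewrite (proj2_sig r) (proj2_sig (p i)).
  move=> idx; have [j Hj] := Hcov idx.
  have [g Hg] := Hcols j.
  exists (proj1_sig g b) => a.
  have := congr1 (fun h : nhom B A => proj1_sig h b) (Hg (idx a)).
  by rewrite /= Hj.
pose G (b : B) : R := proj1_sig (constructive_indefinite_description _ (Hb b)).
have HG : forall b i, proj1_sig (p i) (proj1_sig r (G b)) = proj1_sig (f (sem_right M i)) b.
  by move=> b; exact: (proj2_sig (constructive_indefinite_description _ (Hb b))).
have Ghom : forall u, G (nop u) = nop (fun l => G (u l)).
  move=> u; apply: (mono_inj Hr); apply: (power_det Hp) => i.
  rewrite HG (proj2_sig r) (proj2_sig (p i)) (proj2_sig (f _)).
  congr nop; apply: functional_extensionality => l; by rewrite HG.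
exists (mkhom Ghom) => i; apply: nhom_eq => b /=; exact: HG.
Qed.

End NUc.

Section Counter.
Variables (d : nat) (hd : 1 < d).

Definition bop (u : 'I_d.+1 -> bool) : bool := 1 < #|[set l | u l]|.

Lemma bnu (u : 'I_d.+1 -> bool) (l : 'I_d.+1) (x : bool) :
  (forall i, i != l -> u i = x) -> bop u = x.
Proof.
move=> H; rewrite /bop; case: x H => H.
  apply: (@leq_trans #|predC1 l|); first by rewrite cardC1 card_ord.
  apply: subset_leq_card; apply/subsetP => i /= Hi; by rewrite inE H.
apply/negbTE; rewrite -leqNgt.
apply: (@leq_trans #|pred1 l|); last by rewrite card1.
apply: subset_leq_card; apply/subsetP => i; rewrite inE => Hi.
rewrite !inE; apply/negPn/negP => /H; by rewrite Hi.
Qed.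

Definition boolalg : nualg d := @NUAlg d bool bop bnu.

Definition pop (u : 'I_d.+1 -> 'I_d -> bool) : 'I_d -> bool :=
  fun i => bop (fun l => u l i).

Lemma pnu (u : 'I_d.+1 -> 'I_d -> bool) (l : 'I_d.+1) (x : 'I_d -> bool) :
  (forall i, i != l -> u i = x) -> pop u = x.
Proof.
move=> H; apply: functional_extensionality => i; apply: (bnu (l:=l)) => j /H -> //.
Qed.

Definition powalg : nualg d := @NUAlg d ('I_d -> bool) pop pnu.

Definition proj (i : 'I_d) : nhom powalg boolalg := @mkhom d powalg boolalg (fun v => v i) (fun u => erefl).

Lemma powalg_power : @is_power (NUcat d) d boolalg powalg proj.
Proof.
move=> X h.
have Hu : forall u, (fun i => proj1_sig (h i) (nop u)) =
   (@nop d powalg (fun l i => proj1_sig (h i) (u l))).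
  move=> u; apply: functional_extensionality => i; by rewrite (proj2_sig (h i)).
exists (@mkhom d X powalg (fun x i => proj1_sig (h i) x) Hu); split.
  by move=> i; apply: nhom_eq.
move=> v Hv; apply: nhom_eq => x /=; apply: functional_extensionality => i.
exact: (congr1 (fun g : nhom X boolalg => proj1_sig g x) (Hv i)).
Qed.

Definition Rcar := {v : 'I_d -> bool | [exists i, v i]}.

Lemma pigeon (w : 'I_d.+1 -> Rcar) : [exists i, pop (fun l => proj1_sig (w l)) i].
Proof.
have H : forall l, exists i : 'I_d, proj1_sig (w l) i.
  by move=> l; apply/existsP; exact: proj2_sig (w l).
have [c Hc] := fin_all_exists H.
have : ~~ injectiveb c.
  apply/negP => /injectiveP Hinj; have := leq_card _ Hinj.
  by rewrite !card_ord ltnn.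
case/injectivePn => l1 [l2 Hne Heq].
apply/existsP; exists (c l1); rewrite /pop /bop.
apply: (@leq_trans #|[set l1; l2]|); first by rewrite cards2 Hne.
apply: subset_leq_card; apply/subsetP => l; rewrite !inE.
by case/orP => /eqP ->; [exact: Hc | rewrite Heq; exact: Hc].
Qed.

Definition Rop (w : 'I_d.+1 -> Rcar) : Rcar :=
  exist (fun v : 'I_d -> bool => [exists i, v i]) (pop (fun l => proj1_sig (w l))) (pigeon w).

Lemma Rnu (u : 'I_d.+1 -> Rcar) (l : 'I_d.+1) (x : Rcar) :
  (forall i, i != l -> u i = x) -> Rop u = x.
Proof.
move=> H; apply: sig_eq => /=; apply: (pnu (l:=l)) => i /H -> //.
Qed.

Definition Ralg : nualg d := @NUAlg d Rcar Rop Rnu.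

Definition rinc : nhom Ralg powalg := @mkhom d Ralg powalg (fun v => proj1_sig v) (fun u => erefl).

Lemma rinc_mono : @is_mono (NUcat d) Ralg powalg rinc.
Proof.
move=> Z g h E; apply: nhom_eq => x; apply: sig_eq.
exact: (congr1 (fun k : nhom Z powalg => proj1_sig k x) E).
Qed.

Lemma NU_not_cube (k' : nat) (hk' : 1 < k') :
  ~ has_M_closed_relations (NUcat d) (Cube d (ltnW hk')).
Proof.
move=> H.
pose f (c : 'I_k') : nhom (unitalg d) boolalg := pt (X:=boolalg) (val c != 0).
have := H boolalg powalg proj powalg_power Ralg rinc rinc_mono (unitalg d) f.
case.
  move=> j.
  have Hv : [exists i, (fun i : 'I_d => val (cube_entry (ltnW hk') i j) != 0) i].
    have Hj : j.+1 < k' ^ d.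
      have := ltn_ord j; have : 0 < k' ^ d by rewrite expn_gt0 ltnW.
      clear; lia.
    have [i Hi] := digits_nonzero (ltnW hk') Hj (ltn0Sn _).
    by apply/existsP; exists i.
  exists (pt (X:=Ralg) (exist (fun v : 'I_d -> bool => [exists i, v i]) (fun i : 'I_d => val (cube_entry (ltnW hk') i j) != 0) Hv)) => i; exact: nhom_eq.
move=> g Hg.
have := proj2_sig (proj1_sig g tt); case/existsP => i.
have := congr1 (fun h : nhom (unitalg d) boolalg => proj1_sig h tt) (Hg i).
by rewrite /= => ->.
Qed.

End Counter.

Theorem proposition2p1 (n m k : nat) (M : sem n m k) (hn : 0 < n) (hk : 0 < k)
  (n' k' : nat) (hn' : 2 <= n') (hk' : 2 <= k') :
  lex_implies M (Cube n' (ltnW hk' : 0 < k')) <->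
  exists idx : 'I_n' -> 'I_n,
    ~ (exists j : 'I_m, forall a : 'I_n', sem_left M (idx a) j = sem_right M (idx a)).
Proof.
split.
  move=> H; case: (classic (exists idx : 'I_n' -> 'I_n,
    ~ (exists j : 'I_m, forall a : 'I_n', sem_left M (idx a) j = sem_right M (idx a)))) => // Hn.
  exfalso.
  have Hcov : forall idx : 'I_n' -> 'I_n, exists j : 'I_m,
      forall a, sem_left M (idx a) j = sem_right M (idx a).
    by move=> idx; apply: NNPP => Hno; apply: Hn; exists idx.
  apply: (@NU_not_cube n' hn' k' hk').
  apply: H; first exact: NUcat_fc.
  exact: NU_closed hn Hcov.
case=> idx Hidx; exact: backward Hidx.
Qed.
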